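(* Let $1\le t\le n$ and let $M_t$ be the real matrix with rows and columns indexed by the nonempty subsets of $[n]$ of size at most $t$, ordered by nondecreasing size, with $M_t[a,b]=2^{|a\cap b|}$. For $0\le i\le t-1$ let $M_t^{(i)}$ denote the Schur complement $M_t/M_i$ of the upper-left principal submatrix $M_i$ (indexed by the sets of size at most $i$), with $M_t^{(0)}=M_t$; its rows and columns are indexed by the subsets $a\subseteq[n]$ with $i<|a|\le t$. Then for all such $a,b$, $$M_t^{(i)}[a,b]=f^{(i+1)}(|a\cap b|)+u^{(i)}(|a|,|b|),$$ where $f^{(i)}(x)=\sum_{k=i}^x\binom xk=2^x-\sum_{k=0}^{i-1}\binom xk$, $u^{(i)}(w,w')=\binom{w-1}{i}\binom{w'-1}{i}/\alpha_i$, and $\alpha_i=\sum_{k=0}^i\binom nk$.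
   Context: For a block matrix $\begin{pmatrix}A&B\\ C&D'\end{pmatrix}$ with $A$ invertible, the Schur complement of $A$ is $D'-CA^{-1}B$. (For $1\le i$, the submatrix $M_i$ is invertible.) *)

(* Defs.v *)
From HB Require Import structures.
From mathcomp Require Import all_boot all_order all_algebra.
Set Implicit Arguments. Unset Strict Implicit. Unset Printing Implicit Defensive.
Import Order.TTheory GRing.Theory Num.Theory.
Local Open Scope ring_scope.

Section Defs.
Variables (R : fieldType) (n : nat).

Definition Mentry (a b : {set 'I_n}) : R := (2%:R) ^+ #|a :&: b|.

Definition idx (i : nat) : {set {set 'I_n}} := [set c : {set 'I_n} | (0 < #|c| <= i)%N].

Definition Mmat (i : nat) : 'M[R]_#|idx i| :=
  \matrix_(p, q) Mentry (enum_val p) (enum_val q).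

(* Entry (a,b) of the Schur complement M_t / M_i, i.e. of D' - C A^{-1} B,
   with A = M_i; a, b range over subsets with i < |a|, |b| <= t. *)
Definition schur (i : nat) (a b : {set 'I_n}) : R :=
  Mentry a b -
  \sum_(p < #|idx i|) \sum_(q < #|idx i|)
     Mentry a (enum_val p) * invmx (Mmat i) p q * Mentry (enum_val q) b.

Definition fpoly (i x : nat) : R := \sum_(i <= k < x.+1) ('C(x, k))%:R.

Definition alpha (i : nat) : R := \sum_(0 <= k < i.+1) ('C(n, k))%:R.

Definition upoly (i w w' : nat) : R :=
  ('C(w.-1, i))%:R * ('C(w'.-1, i))%:R / alpha i.

End Defs.

(* Main.v *)
Require Import Defs.
From HB Require Import structures.
From mathcomp Require Import all_boot all_order all_algebra.
From mathcomp Require Import ring.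
Import Order.TTheory GRing.Theory Num.Theory.
Local Open Scope ring_scope.

Section H.
Variables (R : realFieldType) (n : nat).
Implicit Types a b c d e : {set 'I_n}.

Definition X a d : R := (d \subset a)%:R.
Definition sg d : R := (-1) ^+ #|d|.
Definition dot (u v : {set 'I_n} -> R) := \sum_d u d * v d.

Lemma sgK d : sg d * sg d = 1.
Proof. by rewrite /sg -exprD addnn -mul2n exprM sqrrN expr1n expr1n. Qed.

Lemma mobius d e : \sum_c X c d * X e c * sg c = (d == e)%:R * sg e.
Proof.
have [de|nde] := boolP (d \subset e); last first.
  rewrite big1; last first.
    move=> c _; rewrite /X.
    case: (boolP (d \subset c)) => dc; case: (boolP (c \subset e)) => ce;
      rewrite /= ?mul0r ?mulr0 ?mul0r //.
    by move: nde; rewrite (subset_trans dc ce).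
  case: (eqVneq d e) => [E|_]; last by rewrite mul0r.
  by move: nde; rewrite E subxx.
have [E|ne] := eqVneq d e.
  rewrite -E (bigD1 d) //= big1 ?addr0 /X ?subxx ?eqxx ?mul1r //.
  move=> c cd; case: (boolP (d \subset c)) => dc; case: (boolP (c \subset d)) => ce;
    rewrite /= ?mul0r ?mulr0 ?mul0r //.
  by move: cd; rewrite eqEsubset dc ce.
rewrite mul0r.
have : (e :\: d) != set0.
  apply/eqP => H; move: ne; rewrite eqEsubset de /=.
  by rewrite -setD_eq0 H eqxx.
case/set0Pn => x; rewrite inE => /andP [xnd xe].
pose tg c := if x \in c then c :\ x else x |: c.
have tgK : involutive tg.
  move=> c; rewrite /tg; case: (boolP (x \in c)) => xc.
    by rewrite setD11 setD1K.
  by rewrite setU11 setU1K.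
set S := (X in X = 0).
have SN : S = - S.
  rewrite {1}/S (reindex_inj (inv_inj tgK)) /S -sumrN; apply: eq_bigr => c _.
  have h1 : X (tg c) d = X c d.
    rewrite /X /tg; case: (boolP (x \in c)) => xc.
      by rewrite subsetD1 (negPf xnd) andbT.
    suff -> : (d \subset x |: c) = (d \subset c) by [].
    apply/idP/idP => h; last exact: subset_trans h (subsetU1 _ _).
    apply/subsetP => y yd; have := subsetP h y yd; rewrite in_setU1.
    by case/orP => // /eqP yx; move: xnd; rewrite -yx yd.
  have h2 : X e (tg c) = X e c.
    rewrite /X /tg; case: (boolP (x \in c)) => xc.
      suff -> : (c :\ x \subset e) = (c \subset e) by [].
      apply/idP/idP => h; last exact: subset_trans (subD1set _ _) h.
      apply/subsetP => y yc; case: (eqVneq y x) => [->//|yx].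
      by apply: (subsetP h); rewrite in_setD1 yx.
    suff -> : (x |: c \subset e) = (c \subset e) by [].
    apply/idP/idP => h; first exact: subset_trans (subsetU1 _ _) h.
    by apply/subsetP => y; rewrite in_setU1 => /orP [/eqP->//|]; apply: (subsetP h).
  have h3 : sg (tg c) = - sg c.
    rewrite /sg /tg; case: (boolP (x \in c)) => xc.
      by rewrite [in RHS](cardsD1 x c) xc exprS mulN1r opprK.
    by rewrite cardsU1 xc exprS mulN1r.
  by rewrite h1 h2 h3 mulrN.
have : S *+ 2 = 0 by rewrite mulr2n {1}SN addNr.
by move/eqP; rewrite mulrn_eq0 /= => /eqP.
Qed.

Lemma count_sum s (G : nat -> R) :
  \sum_d X s d * G #|d| = \sum_(k < n.+1) 'C(#|s|, k)%:R * G k.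
Proof.
transitivity (\sum_(d : {set 'I_n}) \sum_(k < n.+1) (#|d| == k)%:R * (X s d * G k)).
  apply: eq_bigr => d _.
  have hd : (#|d| < n.+1)%N by rewrite ltnS -[X in (_ <= X)%N](card_ord n) max_card.
  rewrite (bigD1 (Ordinal hd)) //= eqxx mul1r big1 ?addr0 //.
  move=> k /negPf kd; case: (eqVneq #|d| k) => [E|_]; last by rewrite mul0r.
  suff : k == Ordinal hd by rewrite kd.
  by apply/eqP/val_inj; rewrite /= E.
rewrite exchange_big; apply: eq_bigr => k _.
rewrite -cards_draws.
under eq_bigr do rewrite /X mulrA -natrM.
rewrite -mulr_suml; congr (_ * _).
rewrite -sum1_card natr_sum [RHS]big_mkcond /=; apply: eq_bigr => d _.
by rewrite inE andbC; case: (_ == _); case: (_ \subset _).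
Qed.

Lemma alt_sum m j :
  \sum_(0 <= k < j.+1) (-1) ^+ k * ('C(m.+1, k))%:R = (-1) ^+ j * ('C(m, j))%:R :> R.
Proof.
elim: j => [|j IH]; first by rewrite big_nat1 !bin0 expr0.
rewrite big_nat_recr //= IH binS natrD exprS.
ring.
Qed.
Lemma Mdot a b : Mentry R a b = dot (X a) (X b).
Proof.
rewrite /Mentry /dot.
transitivity (\sum_d X (a :&: b) d).
  rewrite -natrX -card_powerset -sum1_card natr_sum big_mkcond /=.
  by apply: eq_bigr => d _; rewrite powersetE /X; case: (_ \subset _).
by apply: eq_bigr => d _; rewrite /X subsetI; case: (d \subset a); case: (d \subset b); rewrite ?mulr0 ?mulr1.
Qed.

Lemma dotC u v : dot u v = dot v u.
Proof. by apply: eq_bigr => d _; rewrite mulrC. Qed.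

Lemma schur_gen i a b (y r : {set 'I_n} -> R) :
  Mmat R n i \in unitmx ->
  (forall d, X a d = \sum_(c in idx n i) y c * X c d + r d) ->
  (forall c, c \in idx n i -> dot r (X c) = 0) ->
  schur R i a b = dot r (X b).
Proof.
move=> uA dec orth.
set m := #|idx n i|.
have dotXa : forall v, dot (X a) v = \sum_(c in idx n i) y c * dot (X c) v + dot r v.
  move=> v; rewrite /dot.
  under eq_bigr do rewrite dec mulrDl mulr_suml.
  rewrite big_split /=; congr (_ + _).
  rewrite exchange_big /=; apply: eq_bigr => c _.
  by rewrite mulr_sumr; apply: eq_bigr => d _; rewrite mulrA.
pose yv : 'rV[R]_m := \row_q y (enum_val q).
pose ra : 'rV[R]_m := \row_p Mentry R a (enum_val p).
pose cb : 'cV[R]_m := \col_q Mentry R (enum_val q) b.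
have raE : ra = yv *m Mmat R n i.
  apply/rowP => p; rewrite !mxE Mdot dotXa orth ?addr0; last exact: enum_valP.
  rewrite big_enum_val; apply: eq_bigr => q _.
  by rewrite !mxE Mdot.
rewrite /schur.
have -> : \sum_(p < #|idx n i|) \sum_(q < #|idx n i|)
     Mentry R a (enum_val p) * invmx (Mmat R n i) p q * Mentry R (enum_val q) b
   = (ra *m invmx (Mmat R n i) *m cb) 0 0.
  rewrite mxE; under [RHS]eq_bigr do rewrite mxE mulr_suml.
  rewrite exchange_big /=; apply: eq_bigr => p _; apply: eq_bigr => q _.
  by rewrite !mxE.
rewrite raE mulmxK // mxE Mdot dotXa big_enum_val.
rewrite addrAC [X in X + _](_ : _ = 0) ?add0r //; apply/eqP; rewrite subr_eq0; apply/eqP.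
by apply: eq_bigr => q _; rewrite !mxE Mdot.
Qed.
Lemma unitA i : Mmat R n i \in unitmx.
Proof.
rewrite unitmxE unitfE; apply/det0P => -[v vnz vA].
move/negP: vnz; apply; apply/eqP/rowP => p0; rewrite mxE.
pose u := fun d => \sum_p v 0 p * X (enum_val p) d.
have uX (q : 'I_#|idx n i|) : dot u (X (enum_val q)) = 0.
  have := vA; move/rowP/(_ q); rewrite !mxE => <-.
  rewrite /dot /u; under eq_bigr do rewrite mulr_suml.
  rewrite exchange_big; apply: eq_bigr => p _; rewrite mxE Mdot /dot mulr_sumr.
  by apply: eq_bigr => d _; rewrite mulrA.
have uu : dot u u = 0.
  rewrite /dot; under eq_bigr do rewrite {2}/u mulr_sumr.
  rewrite exchange_big big1 //= => q _.
  transitivity (v 0 q * dot u (X (enum_val q))); last by rewrite uX mulr0.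
  rewrite /dot mulr_sumr; apply: eq_bigr => d _.
  by rewrite mulrCA.
have u0 d : u d = 0.
  have hp : forall e, xpredT e -> 0 <= u e * u e by move=> e _; rewrite -expr2 sqr_ge0.
  have := @psumr_eq0P _ _ xpredT (fun d => u d * u d) hp uu d isT.
  by move/eqP; rewrite mulf_eq0 orbb => /eqP.
have key : \sum_e X e (enum_val p0) * sg e * u e = sg (enum_val p0) * v 0 p0.
  rewrite /u; under eq_bigr do rewrite mulr_sumr.
  rewrite exchange_big /= (bigD1 p0) //= [X in _ + X]big1 ?addr0.
    transitivity (v 0 p0 * \sum_e X e (enum_val p0) * X (enum_val p0) e * sg e).
      by rewrite mulr_sumr; apply: eq_bigr => e _; ring.
    by rewrite mobius eqxx mul1r mulrC.
  move=> p pp0.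
  transitivity ((\sum_e X e (enum_val p0) * X (enum_val p) e * sg e) * v 0 p).
    by rewrite mulr_suml; apply: eq_bigr => e _; ring.
  rewrite mobius; case: (eqVneq (enum_val p0) (enum_val p)) => [E|_].
    by move: pp0; rewrite (enum_val_inj E) eqxx.
  by rewrite !mul0r.
move: key; rewrite big1; last by move=> e _; rewrite u0 mulr0.
move/esym/eqP; rewrite mulf_eq0 => /orP [|/eqP //].
by move=> /eqP h; move: (sgK (enum_val p0)); rewrite h mul0r => /eqP; rewrite eq_sym oner_eq0.
Qed.
Definition w (i : nat) d : R := (#|d| <= i)%:R * sg d.

Lemma card_le d : (#|d| <= n)%N.
Proof. by rewrite -[X in (_ <= X)%N](card_ord n) max_card. Qed.

Lemma dot_ww i : (i <= n)%N -> dot (w i) (w i) = alpha R n i.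
Proof.
move=> hin.
transitivity (\sum_d X setT d * (fun k => (k <= i)%:R) #|d|).
  apply: eq_bigr => d _; rewrite /w /X subsetT /= mul1r.
  case: (#|d| <= i)%N; rewrite ?mul0r // !mul1r; exact: sgK.
rewrite (count_sum _ (fun k => (k <= i)%:R)) cardsT card_ord /alpha (big_nat_widen _ _ _ _ _ (hin : (i.+1 <= n.+1)%N)).
rewrite [RHS]big_mkcond /= big_mkord; apply: eq_bigr => k _ /=.
by rewrite ltnS; case: (k <= i)%N => /=; rewrite ?mulr1 ?mulr0.
Qed.

Lemma dot_Xw i (s : {set 'I_n}) : (i <= n)%N -> (0 < #|s|)%N ->
  dot (X s) (w i) = (-1) ^+ i * ('C(#|s|.-1, i))%:R.
Proof.
move=> hin; case E: #|s| => [//|m] _ /=.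
transitivity (\sum_d X s d * (fun k => (k <= i)%:R * (-1) ^+ k) #|d|) => //.
rewrite (count_sum _ (fun k => (k <= i)%:R * (-1) ^+ k)) E -(alt_sum m i) (big_nat_widen _ _ _ _ _ (hin : (i.+1 <= n.+1)%N)).
rewrite [RHS]big_mkcond /= big_mkord; apply: eq_bigr => k _ /=.
rewrite ltnS; case: (k <= i)%N => /=; by rewrite ?mul1r ?mul0r ?mulr0 // mulrC.
Qed.

Lemma dot_hi i a b :
  dot (fun d => ((d \subset a) && (i < #|d|)%N)%:R) (X b) = fpoly R i.+1 #|a :&: b|.
Proof.
transitivity (\sum_d X (a :&: b) d * (fun k => (i < k)%:R) #|d|).
  apply: eq_bigr => d _; rewrite /X subsetI.
  by case: (d \subset a); case: (d \subset b); case: (i < #|d|)%N; rewrite ?mulr0 ?mulr1 ?mul0r ?mul1r.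
rewrite (count_sum _ (fun k => (i < k)%:R)) /fpoly (big_nat_widenl _ _ _ _ _ (leq0n i.+1)).
rewrite (big_nat_widen _ _ _ _ _ (card_le (a :&: b) : (#|a :&: b|.+1 <= n.+1)%N)).
rewrite [RHS]big_mkcond /= big_mkord; apply: eq_bigr => k _ /=.
case: (i < k)%N => /=; rewrite ?mulr1 ?mulr0 //=.
by case: (ltnP k #|a :&: b|.+1) => // h; rewrite bin_small.
Qed.
End H.

Theorem lemma9 (R : realFieldType) (n t i : nat)
  (ht1 : (1 <= t)%N) (htn : (t <= n)%N) (hit : (i <= t.-1)%N)
  (a b : {set 'I_n})
  (ha : (i < #|a| <= t)%N) (hb : (i < #|b| <= t)%N) :
  schur R i a b = fpoly R i.+1 #|a :&: b| + upoly R n i #|a| #|b|.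
Proof.
have hin : (i <= n)%N.
  by apply: leq_trans hit _; apply: leq_trans (leq_pred t) htn.
have a0 : (0 < #|a|)%N by case/andP: ha => h _; exact: leq_ltn_trans (leq0n i) h.
have b0 : (0 < #|b|)%N by case/andP: hb => h _; exact: leq_ltn_trans (leq0n i) h.
have al0 : alpha R n i != 0.
  rewrite /alpha big_nat_recl // bin0 -natr_sum -natrD pnatr_eq0.
  by rewrite add1n.
pose W := w R n i.
pose Xh := fun d : {set 'I_n} => ((d \subset a) && (i < #|d|)%N)%:R : R.
pose beta := dot R n (X R n a) W / alpha R n i.
pose r := fun d => Xh d + beta * W d.
pose v := fun d => X R n a d - r d.
pose y := fun c => sg R n c * \sum_e X R n e c * sg R n e * v e.
have Whi : forall d : {set 'I_n}, (i < #|d|)%N -> W d = 0.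
  by move=> d h; rewrite /W /w leqNgt h mul0r.
have vhi : forall d : {set 'I_n}, (i < #|d|)%N -> v d = 0.
  move=> d h; rewrite /v /r Whi // mulr0 addr0 /Xh /X h andbT subrr //.
have ww : dot R n W W = alpha R n i by exact: dot_ww.
rewrite (@schur_gen R n i a b y r (unitA R n i)).
-
  rewrite /dot /r; under eq_bigr do rewrite mulrDl -mulrA.
  rewrite big_split /= -mulr_sumr.
  have -> : \sum_d Xh d * X R n b d = fpoly R i.+1 #|a :&: b| by exact: dot_hi.
  congr (_ + _).
  have -> : \sum_i W i * X R n b i = dot R n (X R n b) W by apply: eq_bigr => d _; rewrite mulrC.
  rewrite /beta /W !dot_Xw // /upoly.
  have s2 : (-1) ^+ i * (-1) ^+ i = 1 :> R.
    by rewrite -exprD addnn -mul2n exprM sqrrN expr1n expr1n.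
  transitivity (((-1) ^+ i * (-1) ^+ i) * ('C(#|a|.-1, i)%:R * 'C(#|b|.-1, i)%:R / alpha R n i)).
    by rewrite /dot; ring.
  by rewrite s2 mul1r.
-
  move=> d.
  have yout : forall c, c \notin idx n i -> y c = 0.
    move=> c; rewrite /idx inE negb_and -leqNgt -ltnNge => /orP [|hc].
      rewrite leqn0 cards_eq0 => /eqP ->.
      rewrite /y /sg cards0 expr0 mul1r.
      transitivity (\sum_e W e * v e).
        apply: eq_bigr => e _; rewrite /X sub0set mul1r.
        case: (ltnP i #|e|) => h; first by rewrite vhi // !mulr0.
        by rewrite /W /w h mul1r.
      transitivity (dot R n W (X R n a) - dot R n W Xh - beta * dot R n W W).
        rewrite /dot -sumrB mulr_sumr -sumrB; apply: eq_bigr => e _.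
        rewrite /v /r; ring.
      have -> : dot R n W Xh = 0.
        rewrite /dot big1 // => e _; case: (ltnP i #|e|) => h; first by rewrite Whi // mul0r.
        by rewrite /Xh ltnNge h andbF mulr0.
      by rewrite ww /beta divfK // dotC subr0 subrr.
    rewrite /y big1 ?mulr0 // => e _.
    case: (boolP (c \subset e)) => ce; last by rewrite /X (negPf ce) !mul0r.
    by rewrite vhi ?mulr0 //; apply: leq_trans hc (subset_leq_card ce).
  have sumall : \sum_c y c * X R n c d = v d.
    transitivity (\sum_c \sum_e (v e * sg R n e) * (X R n c d * X R n e c * sg R n c)).
      apply: eq_bigr => c _; rewrite /y mulr_sumr mulr_suml; apply: eq_bigr => e _; ring.
    rewrite exchange_big /=.
    transitivity (\sum_e (v e * sg R n e) * ((d == e)%:R * sg R n e)).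
      by apply: eq_bigr => e _; rewrite -mulr_sumr mobius.
    rewrite (bigD1 d) //= eqxx mul1r [X in _ + X]big1 ?addr0.
      by rewrite -mulrA sgK mulr1.
    by move=> e /negPf ed; rewrite eq_sym ed mul0r mulr0.
  rewrite big_mkcond /= -[in LHS](subrK (r d) (X R n a d)); congr (_ + _).
  rewrite -[LHS]/(v d) -sumall; apply: eq_bigr => c _.
  by case: (boolP (c \in idx n i)) => // /yout ->; rewrite mul0r.
-
  move=> c; rewrite /idx inE => /andP [c0 ci].
  rewrite /dot /r; under eq_bigr do rewrite mulrDl -mulrA.
  rewrite big_split /= -mulr_sumr big1 ?add0r; last first.
    move=> e _; case: (boolP (e \subset c)) => ec; last by rewrite /X (negPf ec) mulr0.
    by rewrite /Xh ltnNge (leq_trans (subset_leq_card ec) ci) andbF mul0r.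
  transitivity (beta * \sum_e X R n e set0 * X R n c e * sg R n e).
    congr (_ * _); apply: eq_bigr => e _.
    rewrite /X sub0set mul1r; case: (boolP (e \subset c)) => ec; last by rewrite !mulr0 mul0r.
    by rewrite /W /w (leq_trans (subset_leq_card ec) ci) !mul1r mulr1.
  rewrite mobius; case: (eqVneq set0 c) => [E|_]; last by rewrite mul0r mulr0.
  by move: c0; rewrite -E cards0.
Qed.
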